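(* Let $F$ and $G$ be Fourier matrices of the same size $N$, with indexing groups $I_F$ and $I_G$, and let $\chi',\chi'':I_G\to I_F$ be bijections. If $P_{\chi'}\,F\,P_{\chi''}^T=G$, then $\chi'$ and $\chi''$ are group isomorphisms.
   Context: For $n\ge1$, $F_n$ is the $n\times n$ matrix with rows and columns indexed by $\mathbb Z_n$ and entries $(F_n)_{i,j}=e^{2\pi i\,\tilde i\tilde j/n}$ ($\tilde i,\tilde j$ any integer representatives). A Fourier matrix is $F=F_{N_1}\otimes\cdots\otimes F_{N_r}$ of size $N=N_1\cdots N_r$, indexed by its indexing group $I_F=\mathbb Z_{N_1}\times\cdots\times\mathbb Z_{N_r}$: for $i=(i_1,\dots,i_r),j=(j_1,\dots,j_r)\in I_F$, $F_{i,j}=\prod_x (F_{N_x})_{i_x,j_x}$, and group index $i$ corresponds to the position of $i$ in the lexicographic order of $I_F$. For Fourier matrices $F,G$ of size $N$ and a bijection $\varphi:I_G\to I_F$, $P_\varphi$ is the $N\times N$ permutation matrix whose rows are indexed by $I_G$ and columns by $I_F$, with $(P_\varphi)_{i,\varphi(i)}=1$ for all $i\in I_G$ and zeros elsewhere. *)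

(* Defs.v *)
From HB Require Import structures.
From mathcomp Require Import all_boot all_order all_algebra.
From mathcomp Require Import all_classical all_reals all_analysis.
From mathcomp Require Import complex.
Set Implicit Arguments. Unset Strict Implicit. Unset Printing Implicit Defensive.
Import Order.TTheory GRing.Theory Num.Theory.
Local Open Scope ring_scope.

(* A list ns = [:: n_1; ...; n_r] encodes the moduli N_x = n_x + 1 >= 1.
   The indexing group I_F = Z_{N_1} x ... x Z_{N_r}: elements are dependent
   finite functions x |-> i_x in 'I_(N_x) (= Z_{N_x}, canonically a zmodType). *)
Definition idx (ns : seq nat) : finType :=
  {dffun forall x : 'I_(size ns), 'I_(nth 0%N ns x).+1}.

Definition fsize (ns : seq nat) : nat := \prod_(n <- ns) n.+1.

Definition idx_add (ns : seq nat) (i j : idx ns) : idx ns :=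
  [ffun x => (i x + j x)%R].

Definition group_iso (ns ms : seq nat) (f : idx ns -> idx ms) : Prop :=
  bijective f /\ forall a b, f (idx_add a b) = idx_add (f a) (f b).

Definition expi (R : realType) (t : R) : R[i] := (cos t +i* sin t)%C.

Definition fmx (R : realType) (T U : finType) := T -> U -> R[i].

Definition fmul (R : realType) (T U V : finType) (A : fmx R T U) (B : fmx R U V)
  : fmx R T V := fun t v => \sum_(u : U) A t u * B u v.

Definition ftr (R : realType) (T U : finType) (A : fmx R T U) : fmx R U T :=
  fun u t => A t u.

(* The Fourier matrix F = F_{N_1} (x) ... (x) F_{N_r}, indexed by I_F:
   F_{i,j} = prod_x exp(2 pi i i_x j_x / N_x). *)
Definition fourier (R : realType) (ns : seq nat) : fmx R (idx ns) (idx ns) :=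
  fun i j => \prod_(x < size ns)
     expi (2 * pi * ((i x : nat) * (j x : nat))%:R / ((nth 0%N ns x).+1)%:R).

Definition permmx (R : realType) (ms ns : seq nat) (phi : idx ms -> idx ns)
  : fmx R (idx ms) (idx ns) := fun i a => if phi i == a then 1 else 0.

Arguments fourier R ns : clear implicits.
Arguments permmx R {ms ns} phi.

(* Main.v *)
Require Import Defs.
From HB Require Import structures.
From mathcomp Require Import all_boot all_order all_algebra.
From mathcomp Require Import all_classical all_reals all_analysis.
From mathcomp Require Import complex.
From mathcomp Require Import ring lra.
Set Implicit Arguments. Unset Strict Implicit. Unset Printing Implicit Defensive.
Import Order.TTheory GRing.Theory Num.Theory.
Local Open Scope ring_scope.

Section S.
Variable R : realType.

Lemma expiD (s t : R) : expi (s + t) = expi s * expi t.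
Proof.
rewrite /expi cosD sinD /=.
apply/eqP; rewrite eq_complex /=; apply/andP; split; apply/eqP.
  by [].
by rewrite addrC.
Qed.

Lemma expi0 : expi (0 : R) = 1.
Proof. by rewrite /expi cos0 sin0. Qed.

Lemma expi2pin (q : nat) : expi (2 * pi * q%:R : R) = 1.
Proof.
elim: q => [|q IH]; first by rewrite mulr0 expi0.
rewrite -[q.+1%:R]natr1 mulrDr mulr1 expiD IH mul1r /expi mulr_natl cos2pi sin2pi //.
Qed.

Definition ee (N k : nat) : R[i] := expi (2 * pi * k%:R / N%:R).

Lemma eeD N k l : ee N (k + l) = ee N k * ee N l.
Proof. by rewrite /ee -expiD natrD mulrDr mulrDl. Qed.

Lemma eeNq N q : (0 < N)%N -> ee N (q * N) = 1.
Proof.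
move=> N0; rewrite /ee natrM mulrA mulfK ?expi2pin //.
by rewrite pnatr_eq0 -lt0n.
Qed.

Lemma eemod N k : (0 < N)%N -> ee N k = ee N (k %% N).
Proof. by move=> N0; rewrite {1}(divn_eq k N) eeD eeNq // mul1r. Qed.

Lemma ee_ne1 N k : (0 < k < N)%N -> ee N k != 1.
Proof.
case/andP=> k0 kN; have N0 : (0 < N)%N by apply: ltn_trans kN.
set t := (pi * k%:R / N%:R : R).
have tpos : 0 < t < pi.
  have Np : (0 : R) < N%:R by rewrite ltr0n.
  apply/andP; split.
    by rewrite /t divr_gt0 // mulr_gt0 ?pi_gt0 // ltr0n.
  rewrite /t ltr_pdivrMr // ltr_pM2l ?pi_gt0 // ltr_nat //.
have -> : ee N k = expi (t + t) by rewrite /ee /t; congr expi; ring.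
rewrite expiD; apply/negP => /eqP H.
have : (expi t * expi t) = 1 by [].
rewrite /expi /= => /eqP; rewrite eq_complex /= => /andP [/eqP H1 /eqP H2].
have s0 := sin_gt0_pi tpos.
have c0 : cos t = 0.
  move: H2; rewrite mulrC -mulr2n => /eqP; rewrite mulrn_eq0 /= mulf_eq0.
  by case/orP => /eqP // st; move: s0; rewrite st ltxx.
have ss : sin t * sin t = 1 by have := cos2Dsin2 t; rewrite c0 expr0n /= add0r expr2.
move: H1; rewrite c0 mul0r sub0r ss => H1; lra.
Qed.

Lemma eeN N : (0 < N)%N -> ee N N = 1.
Proof. by move=> N0; rewrite -{2}[N]mul1n eeNq. Qed.

Lemma ee_inj n a b : (a < n.+1)%N -> (b < n.+1)%N -> ee n.+1 a = ee n.+1 b -> a = b.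
Proof.
wlog ab : a b / (a <= b)%N.
  move=> W ha hb H; case: (leqP a b) => h; first exact: W.
  by apply/esym/W => //; apply: ltnW.
move=> ha hb H.
have U : ee n.+1 (n.+1 - a) * ee n.+1 a = 1 by rewrite -eeD subnK ?eeN // ltnW.
have E1 : ee n.+1 (b - a) = 1.
  rewrite -(subnKC ab) eeD in H.
  by rewrite -[ee _ (b - a)]mul1r -U -mulrA -H U.
case: (posnP (b - a)) => [|h].
  by move/eqP; rewrite subn_eq0 => ba; apply/eqP; rewrite eqn_leq ab ba.
have : (0 < b - a < n.+1)%N by rewrite h /=; apply: leq_ltn_trans hb; apply: leq_subr.
by move/ee_ne1; rewrite E1 eqxx.
Qed.

Lemma ee0 N : ee N 0 = 1.
Proof. by rewrite /ee mulr0 mul0r expi0. Qed.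

Lemma ee_inj_ord n (i j : 'I_n.+1) :
  ee n.+1 (i * (@inord n 1)) = ee n.+1 (j * (@inord n 1)) -> i = j.
Proof.
case: n i j => [|n] i j; first by rewrite !ord1.
rewrite inordK // !muln1 => H; apply/val_inj/(ee_inj (ltn_ord i) (ltn_ord j) H).
Qed.

Lemma fourierE ns (i j : idx ns) :
  fourier R ns i j = \prod_(x < size ns) ee (nth 0%N ns x).+1 (i x * j x).
Proof. by []. Qed.

Lemma fourier_sym ns (i j : idx ns) : fourier R ns i j = fourier R ns j i.
Proof. by rewrite !fourierE; apply: eq_bigr => x _; rewrite mulnC. Qed.

Lemma fourierD ns (a b w : idx ns) :
  fourier R ns (idx_add a b) w = fourier R ns a w * fourier R ns b w.
Proof.
rewrite !fourierE -big_split; apply: eq_bigr => x _ /=; rewrite ffunE.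
rewrite -eeD -mulnDl [LHS]eemod // [RHS]eemod //.
have -> : val (a x + b x)%R = ((a x + b x) %% (nth 0%N ns x).+1)%N by [].
by rewrite modnMml.
Qed.

Lemma fourierDr ns (a b w : idx ns) :
  fourier R ns w (idx_add a b) = fourier R ns w a * fourier R ns w b.
Proof. by rewrite !(@fourier_sym ns w) fourierD. Qed.

Lemma fourier_rows ns (a b : idx ns) :
  (forall w, fourier R ns a w = fourier R ns b w) -> a = b.
Proof.
move=> H; apply/(@ffunP _ (fun x : 'I_(size ns) => 'I_(nth 0%N ns x).+1)) => x.
pose u : idx ns := finfun (fun y => if y == x then inord 1 else ord0).
have Fu c : fourier R ns c u = ee (nth 0%N ns x).+1 (c x * (@inord (nth 0%N ns x) 1)).
  rewrite fourierE (bigD1 x) //= big1 ?mulr1; first rewrite /u ffunE.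
by rewrite eqxx.
  by move=> y /negbTE yx; rewrite /u ffunE yx muln0 ee0.
by apply: ee_inj_ord; rewrite -!Fu.
Qed.

Lemma sum_delta_l (T : finType) (c : T) (f : T -> R[i]) :
  \sum_u (if c == u then 1 else 0) * f u = f c.
Proof.
rewrite (bigD1 c) //= eqxx mul1r big1 ?addr0 // => u /negbTE.
by rewrite eq_sym => ->; rewrite mul0r.
Qed.

Lemma sum_delta_r (T : finType) (c : T) (f : T -> R[i]) :
  \sum_u f u * (if c == u then 1 else 0) = f c.
Proof.
rewrite (bigD1 c) //= eqxx mulr1 big1 ?addr0 // => u /negbTE.
by rewrite eq_sym => ->; rewrite mulr0.
Qed.
End S.

Theorem lemma4p3 (R : realType) (nsF nsG : seq nat)
  (hsize : fsize nsF = fsize nsG)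
  (chi' chi'' : idx nsG -> idx nsF)
  (bij' : bijective chi') (bij'' : bijective chi'')
  (hP : fmul (fmul (permmx R chi') (fourier R nsF)) (ftr (permmx R chi''))
        = fourier R nsG) :
  group_iso chi' /\ group_iso chi''.
Proof.
have He g h : fourier R nsF (chi' g) (chi'' h) = fourier R nsG g h.
  have := congr1 (fun M => M g h) hP; rewrite /= /fmul /ftr /permmx.
  under eq_bigr do rewrite sum_delta_l.
  by rewrite sum_delta_r.
case: (bij') => g1 c1 c1'; case: (bij'') => g2 c2 c2'.
split; split => // a b; apply: (@fourier_rows R).
  by move=> w; rewrite -(c2' w) He fourierD fourierD !He.
by move=> w; rewrite [LHS]fourier_sym [RHS]fourier_sym -(c1' w) He fourierDr fourierDr !He.
Qed.
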